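(* Let $\alpha_1,\dots,\alpha_n\in\Gamma$ be linearly independent over $\mathbb{R}$, and let $A$ and $\mathcal{V}$ be the matrices defined in the context. Fix $i\neq j$ and an integer $p\ge3$. Suppose that either $\operatorname{len}(\alpha_j-\alpha_i)\ge p$, or both of the following hold: (Q) for all $k\notin\{i,j\}$, $$\langle\alpha_j,\alpha_i\rangle\langle\alpha_j-\alpha_k,\alpha_k-\alpha_i\rangle=\langle\alpha_j,\alpha_k\rangle\langle\alpha_k,\alpha_i\rangle;$$ (V) for every ordered pair $(\beta,\gamma)$ of nonzero elements of $\Gamma$ with $\beta+\gamma=\alpha_j-\alpha_i$ that is not of the form $(\alpha_j-\alpha_k,\alpha_k-\alpha_i)$ or $(\alpha_k-\alpha_i,\alpha_j-\alpha_k)$ for some $k\notin\{i,j\}$, one has $\langle\beta,\gamma\rangle f^\beta f^\gamma\in(\mathbf{s})^p$. Then the $(j,i)$ entry of the covariant derivative $d\mathcal{V}+A\mathcal{V}-\mathcal{V}A$ lies in $(\mathbf{s})^p$.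
   Context: Let $\Gamma\cong\mathbb{Z}^n$ be a lattice with basis $[S_1],\dots,[S_n]$, and let $\langle-,-\rangle:\Gamma\times\Gamma\to\mathbb{Z}$ be a skew-symmetric bilinear form. For $\alpha=\sum_i a_i[S_i]$ set $\operatorname{len}(\alpha)=\sum_i|a_i|$. Let $U\subset\operatorname{Hom}(\Gamma,\mathbb{C})$ be a connected open set; for $\alpha\in\Gamma$, $Z(\alpha)$ is a linear holomorphic function on $U$. Let $\mathbf{s}=(s_1,\dots,s_n)$ be formal variables, and let $R$ be the ring of formal power series in $\mathbf{s}$ with coefficients holomorphic on $U$. Differential forms with coefficients in $R$ are power series in $\mathbf{s}$ whose coefficients are holomorphic forms, and $d$ acts coefficientwise. $(\mathbf{s})^p$ denotes the series (or forms) all of whose monomials have total degree at least $p$. Let $\{f^\alpha\}_{\alpha\in\Gamma\setminus\{0\}}\subset R$ satisfy: (i) $f^\alpha\in(\mathbf{s})^{\operatorname{len}(\alpha)}$; (ii) if $f^\alpha\neq0$ then $Z(\alpha)$ is nowhere zero on $U$; (iii) the Joyce PDE $$df^\alpha=-\sum_{\beta+\gamma=\alpha,\ \beta,\gamma\neq0}(-1)^{\langle\beta,\gamma\rangle}\langle\beta,\gamma\rangle f^\beta f^\gamma\, d\log Z(\beta)$$ holds, summing over ordered pairs. Define the $n\times n$ matrices $A$ (of $1$-forms) and $\mathcal{V}$ (with entries in $R$) by $A_{kk}=\mathcal{V}_{kk}=0$ and, for $k\neq l$, $$\mathcal{V}_{kl}=(-1)^{\langle\alpha_k,\alpha_l\rangle}\langle\alpha_k,\alpha_l\rangle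 f^{\alpha_k-\alpha_l},\qquad A_{kl}=\mathcal{V}_{kl}\,d\log Z(\alpha_k-\alpha_l),$$ with $A_{kl}=0$ when $f^{\alpha_k-\alpha_l}=0$. *)

(* Defs.v *)
From HB Require Import structures.
From mathcomp Require Import all_boot all_order all_algebra.
Set Implicit Arguments. Unset Strict Implicit. Unset Printing Implicit Defensive.
Import Order.TTheory GRing.Theory Num.Theory.
Local Open Scope ring_scope.

(* The lattice Gamma = Z^n, elements written in the basis [S_1..S_n]. *)
Definition lattice (n : nat) := {ffun 'I_n -> int}.

Definition len (n : nat) (a : lattice n) : nat := (\sum_(i < n) `|a i|)%N.

Definition pairing (n : nat) (B : 'I_n -> 'I_n -> int) (b c : lattice n) : int :=
  \sum_(i < n) \sum_(j < n) b i * c j * B i j.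

Definition skew_form (n : nat) (B : 'I_n -> 'I_n -> int) : Prop :=
  forall i j, B i j = - B j i.

Definition sgnpow (k : int) : int := (-1) ^+ `|k|%N.

(* Monomials s^m in the formal variables s_1..s_n (multi-indices). *)
Definition mono (n : nat) := {ffun 'I_n -> nat}.
Definition deg (n : nat) (m : mono n) : nat := (\sum_(i < n) m i)%N.

(* Formal power series in s with coefficients in H (resp. in the module
   Om of 1-forms): functions from multi-indices to coefficients. *)
Definition series (n : nat) (T : Type) := mono n -> T.

(* Cauchy product coefficient at m: sum over u <= m of a_u * b_(m-u).
   The index u ranges over ffuns with values < deg m + 1 (every u <= m does). *)
Definition psmul (H : comUnitRingType) (n : nat) (a b : series n H) : series n H :=
  fun m => \sum_(u : {ffun 'I_n -> 'I_(deg m).+1} | [forall i, (u i <= m i)%N])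
             a [ffun i => nat_of_ord (u i)] * b [ffun i => (m i - u i)%N].

Definition psmulf (H : comUnitRingType) (Om : lmodType H) (n : nat)
    (a : series n H) (w : series n Om) : series n Om :=
  fun m => \sum_(u : {ffun 'I_n -> 'I_(deg m).+1} | [forall i, (u i <= m i)%N])
             a [ffun i => nat_of_ord (u i)] *: w [ffun i => (m i - u i)%N].

(* membership in (s)^p : all monomials have total degree >= p *)
Definition inS (T : zmodType) (n : nat) (p : nat) (a : series n T) : Prop :=
  forall m : mono n, (deg m < p)%N -> a m = 0.

(* Z(alpha) = sum_i a_i Z(S_i), linear in alpha *)
Definition Zc (H : comUnitRingType) (n : nat) (z : 'I_n -> H) (a : lattice n) : H :=
  \sum_(i < n) z i *~ a i.

Definition dlogZ (H : comUnitRingType) (Om : lmodType H) (dH : H -> Om)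
    (n : nat) (z : 'I_n -> H) (b : lattice n) : Om :=
  (Zc z b)^-1 *: dH (Zc z b).

Definition boxpt (n N : nat) (v : {ffun 'I_n -> 'I_(N.*2.+1)}) : lattice n :=
  [ffun i => (nat_of_ord (v i))%:Z - N%:Z].

(* Right-hand side of the Joyce PDE, as a 1-form-valued series:
   - sum over ordered pairs (beta, gamma), beta, gamma nonzero, beta+gamma = alpha,
   of (-1)^<b,g> <b,g> f^b f^g dlog Z(b).
   The sum is infinite but s-adically convergent: by condition (i) only the
   pairs with len(beta) <= deg m can contribute to the coefficient of s^m,
   so the coefficient at m is computed as the (finite) sum over the box
   |beta_i| <= deg m. *)
Definition joyce_rhs (H : comUnitRingType) (Om : lmodType H) (dH : H -> Om)
    (n : nat) (B : 'I_n -> 'I_n -> int) (z : 'I_n -> H)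
    (f : lattice n -> series n H) (a : lattice n) : series n Om :=
  fun m => - \sum_(v : {ffun 'I_n -> 'I_((deg m).*2.+1)})
      let b := boxpt v in
      let g := a - b in
      if (b != 0) && (g != 0) then
        (psmul (f b) (f g) m *: dlogZ dH z b) *~
          (sgnpow (pairing B b g) * pairing B b g)
      else 0.

Definition Vmat (H : comUnitRingType) (n : nat) (B : 'I_n -> 'I_n -> int)
    (f : lattice n -> series n H) (al : 'I_n -> lattice n) (k l : 'I_n) : series n H :=
  fun m => if k == l then 0 else
    f (al k - al l) m *~ (sgnpow (pairing B (al k) (al l)) * pairing B (al k) (al l)).

Definition Amat (H : comUnitRingType) (Om : lmodType H) (dH : H -> Om)
    (n : nat) (B : 'I_n -> 'I_n -> int) (z : 'I_n -> H)
    (f : lattice n -> series n H) (al : 'I_n -> lattice n) (k l : 'I_n) : series n Om :=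
  fun m => if k == l then 0 else Vmat B f al k l m *: dlogZ dH z (al k - al l).

Definition covder (H : comUnitRingType) (Om : lmodType H) (dH : H -> Om)
    (n : nat) (B : 'I_n -> 'I_n -> int) (z : 'I_n -> H)
    (f : lattice n -> series n H) (al : 'I_n -> lattice n) (j i : 'I_n) : series n Om :=
  fun m => dH (Vmat B f al j i m)
    + \sum_(k < n) psmulf (Vmat B f al k i) (Amat dH B z f al j k) m
    - \sum_(k < n) psmulf (Vmat B f al j k) (Amat dH B z f al k i) m.

(* linear independence over Q (equivalently over R, for integer vectors) *)
Definition lin_indep (n : nat) (al : 'I_n -> lattice n) : Prop :=
  forall c : 'I_n -> rat,
    (forall l : 'I_n, \sum_(k < n) c k * ((al k l)%:~R : rat) = 0) ->
    forall k, c k = 0.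

(* Main.v *)
Require Import Defs.
From HB Require Import structures.
From mathcomp Require Import all_boot all_order all_algebra zify ring.
From Stdlib Require Import FunctionalExtensionality.
Import Order.TTheory GRing.Theory Num.Theory.
Local Open Scope ring_scope.

Lemma sgnpowD a b : sgnpow (a + b) = sgnpow a * sgnpow b.
Proof.
have E k : sgnpow k = (-1) ^ k by case: k.
by rewrite !E exprzDr // unitrN1.
Qed.

Lemma sgnpowN a : sgnpow (- a) = sgnpow a.
Proof. by rewrite /sgnpow abszN. Qed.

Section P.
Variables (n : nat) (B : 'I_n -> 'I_n -> int).

Lemma pairingDl x y w : pairing B (x + y) w = pairing B x w + pairing B y w.
Proof.
rewrite /pairing -big_split; apply: eq_bigr => k _ /=.
rewrite -big_split; apply: eq_bigr => l _ /=; rewrite ffunE; ring.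
Qed.
Lemma pairingNl x w : pairing B (- x) w = - pairing B x w.
Proof.
rewrite /pairing -sumrN; apply: eq_bigr => k _ /=.
rewrite -sumrN; apply: eq_bigr => l _ /=; rewrite ffunE; ring.
Qed.
Lemma pairingBl x y w : pairing B (x - y) w = pairing B x w - pairing B y w.
Proof. by rewrite pairingDl pairingNl. Qed.
Lemma pairing_skew x y : skew_form B -> pairing B x y = - pairing B y x.
Proof.
move=> hB; rewrite /pairing exchange_big -sumrN; apply: eq_bigr => k _ /=.
rewrite -sumrN; apply: eq_bigr => l _ /=; rewrite hB; ring.
Qed.
Lemma pairingBr x y w : skew_form B -> pairing B w (x - y) = pairing B w x - pairing B w y.
Proof. move=> hB; rewrite !(pairing_skew w) // pairingBl; ring. Qed.
Lemma pairing_xx x : skew_form B -> pairing B x x = 0.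
Proof. move=> hB; have := pairing_skew x x hB. lia. Qed.
End P.

Lemma len_tri n (x y : lattice n) : (len (x + y)%R <= len x + len y)%N.
Proof.
rewrite /len -big_split /=; apply: leq_sum => k _; rewrite ffunE.
by have := leqD_dist (x k) 0 (- y k); rewrite subr0 sub0r !opprK.
Qed.

Lemma len_coord n (x : lattice n) k : (`|x k| <= len x)%N.
Proof. by rewrite /len (bigD1 k) //= leq_addr. Qed.

Lemma deg_coord n (m : mono n) k : (m k <= deg m)%N.
Proof. by rewrite /deg (bigD1 k) //= leq_addr. Qed.

Section PS.
Variables (H : comUnitRingType) (n : nat).

Lemma psmul_supp (a b : series n H) p1 p2 :
  inS p1 a -> inS p2 b -> inS (p1 + p2) (psmul a b).
Proof.
move=> ha hb m hm; rewrite /psmul big1 // => u /forallP hu.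
set U : mono n := [ffun i => nat_of_ord (u i)].
set W : mono n := [ffun i => (m i - u i)%N].
have hd : (deg U + deg W = deg m)%N.
  rewrite /deg -big_split; apply: eq_bigr => k _ /=; rewrite !ffunE.
  by rewrite subnKC ?hu.
case: (ltnP (deg U) p1) => h; first by rewrite ha // mul0r.
by rewrite hb ?mulr0 //; lia.
Qed.

Definition phi (m : mono n) (u : {ffun 'I_n -> 'I_(deg m).+1}) :
  {ffun 'I_n -> 'I_(deg m).+1} :=
  [ffun i => if (u i <= m i)%N then inord (m i - u i) else u i].

Lemma phiE (m : mono n) (u : {ffun 'I_n -> 'I_(deg m).+1}) i : (u i <= m i)%N -> nat_of_ord (phi m u i) = (m i - u i)%N.
Proof.
move=> h; rewrite /phi ffunE h inordK //; have := deg_coord _ m i; lia.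
Qed.

Lemma phiK (m : mono n) : involutive (@phi m).
Proof.
move=> u; apply/ffunP => i.
case h: (u i <= m i)%N.
  apply: val_inj => /=; rewrite phiE; last by rewrite phiE //; lia.
  by rewrite phiE //; lia.
by rewrite /phi !ffunE h h.
Qed.

Lemma psmulC (a b : series n H) (m : mono n) : psmul a b m = psmul b a m.
Proof.
rewrite /psmul (reindex_inj (inv_inj (@phiK m))) /=.
apply: eq_big => u.
  apply/forallP/forallP => h i; have := h i.
    by case hu: (u i <= m i)%N => //; rewrite /phi ffunE hu hu.
  by move=> hu'; rewrite (phiE _ _ _ hu'); lia.
move=> /forallP hu.
have hi i : (u i <= m i)%N.
  have := hu i; rewrite /phi ffunE.
  by case E: (u i <= m i)%N => //; rewrite E.
have e1 : [ffun i => (m i - phi m u i)%N] = [ffun i => nat_of_ord (u i)].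
  by apply/ffunP => i; rewrite [LHS]ffunE [RHS]ffunE (phiE _ _ _ (hi i)); have := hi i; lia.
have e2 : [ffun i => nat_of_ord (phi m u i)] = [ffun i => (m i - u i)%N].
  by apply/ffunP => i; rewrite [LHS]ffunE [RHS]ffunE (phiE _ _ _ (hi i)).
by rewrite e1 e2 mulrC.
Qed.

Lemma psmulZ (a b : series n H) c d m :
  psmul (fun u => a u *~ c) (fun u => b u *~ d) m = psmul a b m *~ (c * d).
Proof.
rewrite /psmul mulrz_suml; apply: eq_bigr => u _.
by rewrite mulrzAl mulrzAr -mulrzA [d * c]mulrC.
Qed.

Lemma psmulfZ (Om : lmodType H) (a b : series n H) (D : Om) m :
  psmulf a (fun u => b u *: D) m = psmul a b m *: D.
Proof.
rewrite /psmulf /psmul scaler_suml; apply: eq_bigr => u _.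
by rewrite scalerA.
Qed.

Lemma psmulf0 (Om : lmodType H) (a : series n H) m :
  psmulf a (fun _ => 0 : Om) m = 0.
Proof. by rewrite /psmulf big1 // => u _; rewrite scaler0. Qed.

Lemma psmul0f (Om : lmodType H) (w : series n Om) m :
  psmulf (fun _ => 0) w m = 0.
Proof. by rewrite /psmulf big1 // => u _; rewrite scale0r. Qed.
End PS.

Lemma sum_delta (R : pzRingType) n (a : 'I_n) (F : 'I_n -> R) :
  \sum_(k < n) (k == a)%:R * F k = F a.
Proof.
rewrite (bigD1 a) //= eqxx mul1r big1 ?addr0 // => k /negbTE ->.
by rewrite mul0r.
Qed.

Lemma lin4 n (al : 'I_n -> lattice n) : lin_indep al ->
  forall a b c d, a != c -> a != d -> al a + al b != al c + al d.
Proof.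
move=> hind a b c d hac had; apply/eqP => E.
pose cc (k : 'I_n) : rat := (k==a)%:R + (k==b)%:R - (k==c)%:R - (k==d)%:R.
have := hind cc.
have h : forall l, \sum_(k < n) cc k * ((al k l)%:~R : rat) = 0.
  move=> l.
  have El : al a l + al b l = al c l + al d l.
    by have := congr1 (fun x : lattice n => x l) E; rewrite /= !ffunE.
  rewrite /cc.
  under eq_bigr => k _ do rewrite !mulrDl !mulNr.
  rewrite !big_split /= !sumrN !sum_delta.
  rewrite -!rmorphD /= -!rmorphN -!rmorphD /= El.
  by rewrite [al c l + _]addrC addrK subrr.
move=> /(_ h a); rewrite /cc eqxx (negbTE hac) (negbTE had) subr0 subr0.
by case: (a == b) => /eqP.
Qed.

Lemma dH_int (H : comUnitRingType) (Om : lmodType H) (dH : H -> Om)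
  (dH_add : forall a b : H, dH (a + b) = dH a + dH b) (x : H) (c : int) :
  dH (x *~ c) = dH x *~ c.
Proof.
have d0 : dH 0 = 0.
  by apply: (@addrI _ (dH 0)); rewrite -dH_add !addr0.
have dN y : dH (- y) = - dH y.
  by apply/eqP; rewrite -addr_eq0 -dH_add addrC subrr d0.
have dn k : dH (x *+ k) = dH x *+ k.
  by elim: k => [|k IH]; rewrite ?mulr0n // !mulrS dH_add IH.
case: c => k; first exact: dn.
by rewrite NegzE !mulrNz dN; congr (- _); exact: dn.
Qed.

Lemma boxpt_inj n N : injective (@boxpt n N).
Proof.
move=> v w E; apply/ffunP => l; apply: val_inj.
have := congr1 (fun x : lattice n => x l) E; rewrite /= /boxpt !ffunE.
move=> /eqP; rewrite (inj_eq (addIr _)) => /eqP; lia.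
Qed.

Lemma box_sum (H : comUnitRingType) (Om : lmodType H) n N (b : lattice n) (X : Om) :
  (len b <= N)%N \/ X = 0 ->
  \sum_(v : {ffun 'I_n -> 'I_(N.*2.+1)}) (if boxpt v == b then X else 0) = X.
Proof.
case=> [hl|->]; last by rewrite big1 // => v _; case: ifP.
pose v0 : {ffun 'I_n -> 'I_(N.*2.+1)} := [ffun l => inord (absz (b l + N%:Z)%R)].
have hv0 : boxpt v0 = b.
  apply/ffunP => l; rewrite /boxpt !ffunE.
  have := len_coord _ b l => hl'.
  move: hl' hl; move: (b l) (len b) => x L h1 h2; rewrite inordK; lia.
rewrite (bigD1 v0) //= hv0 eqxx big1 ?addr0 // => v hv.
case: ifP => // /eqP E; move: hv; rewrite -hv0 in E.
by rewrite (boxpt_inj _ _ _ _ E) eqxx.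
Qed.

Theorem lemma3p9
  (n : nat)
  (H : comUnitRingType) (Om : lmodType H) (dH : H -> Om)
  (dH_add : forall a b : H, dH (a + b) = dH a + dH b)
  (dH_mul : forall a b : H, dH (a * b) = a *: dH b + b *: dH a)
  (B : 'I_n -> 'I_n -> int) (hB : skew_form B)
  (z : 'I_n -> H)
  (f : lattice n -> series n H)
  (hf_i : forall a : lattice n, a != 0 -> inS (len a) (f a))
  (hf_ii : forall a : lattice n, a != 0 -> (exists m, f a m != 0) ->
             Zc z a \is a GRing.unit)
  (hf_iii : forall a : lattice n, a != 0 ->
             forall m, dH (f a m) = joyce_rhs dH B z f a m)
  (al : 'I_n -> lattice n) (hind : lin_indep al)
  (i j : 'I_n) (hij : i != j) (p : nat) (hp : (3 <= p)%N)
  (hyp : (p <= len (al j - al i)%R)%N \/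
         ((forall k : 'I_n, k != i -> k != j ->
             pairing B (al j) (al i) * pairing B (al j - al k) (al k - al i)
             = pairing B (al j) (al k) * pairing B (al k) (al i)) /\
          (forall b g : lattice n, b != 0 -> g != 0 -> b + g = al j - al i ->
             ~ (exists k : 'I_n, k != i /\ k != j /\
                  ((b = al j - al k /\ g = al k - al i) \/
                   (b = al k - al i /\ g = al j - al k))) ->
             inS p (fun m => psmul (f b) (f g) m *~ pairing B b g)))) :
  inS p (covder dH B z f al j i).
Proof.
move=> m hm.
have al_inj k k' : k != k' -> al k != al k'.
  move=> h; apply/eqP => E; have := lin4 _ _ hind k k k' k' h h.
  by rewrite E eqxx.
have sub0 k l : k != l -> al k - al l != 0.
  by move=> h; rewrite subr_eq0 al_inj.
set a := al j - al i.
pose b1 k := al j - al k.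
pose b2 k := al k - al i.
have ab1 k : a - b1 k = b2 k by rewrite /a /b1 /b2 opprB addrC addrA subrK.
have ab2 k : a - b2 k = b1 k by rewrite /a /b1 /b2 opprB addrA subrK.
have b21 k : b2 k + b1 k = a by rewrite /a /b1 /b2 addrC addrA subrK.
have d11 k k' : k != k' -> b1 k != b1 k'.
  by move=> h; rewrite /b1 (inj_eq (addrI _)) (inj_eq oppr_inj) al_inj.
have d22 k k' : k != k' -> b2 k != b2 k'.
  by move=> h; rewrite /b2 (inj_eq (addIr _)) al_inj.
have d12 k k' : k != i -> k != j -> k' != i -> k' != j -> b1 k != b2 k'.
  move=> hki hkj hk'i hk'j; apply/eqP => E.
  have := lin4 _ _ hind j i k' k.
  rewrite eq_sym hk'j eq_sym hkj => /(_ isT isT) /eqP; apply.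
  have E2 := congr1 (fun x => x + al k + al i) E; move: E2.
  by rewrite /b1 /b2 /= subrK [al k' - al i + _]addrAC subrK.
have a0 : a != 0 by rewrite /a sub0 // eq_sym.
have hji : j != i by rewrite eq_sym.
have dH0 : dH 0 = 0.
  by apply: (@addrI _ (dH 0)); rewrite -dH_add !addr0.
pose c k l := sgnpow (pairing B (al k) (al l)) * pairing B (al k) (al l).
have Vne k l : k != l -> Vmat B f al k l = fun u => f (al k - al l) u *~ c k l.
  by move=> h; apply: functional_extensionality => u; rewrite /Vmat (negbTE h).
have Ane k l : k != l -> Amat dH B z f al k l =
    fun u => (f (al k - al l) u *~ c k l) *: dlogZ dH z (al k - al l).
  by move=> h; apply: functional_extensionality => u; rewrite /Amat /Vmat (negbTE h).
have Vkk k : Vmat B f al k k = fun _ => 0.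
  by apply: functional_extensionality => u; rewrite /Vmat eqxx.
have Akk k : Amat dH B z f al k k = fun _ => 0.
  by apply: functional_extensionality => u; rewrite /Amat eqxx.
pose X k := psmul (f (b1 k)) (f (b2 k)) m.
have AVe k : k != i -> k != j -> psmulf (Vmat B f al k i) (Amat dH B z f al j k) m
    = (X k *~ (c k i * c j k)) *: dlogZ dH z (b1 k).
  move=> h1 h2; rewrite Vne // Ane 1?eq_sym // psmulfZ psmulZ psmulC //.
have VAe k : k != i -> k != j -> psmulf (Vmat B f al j k) (Amat dH B z f al k i) m
    = (X k *~ (c j k * c k i)) *: dlogZ dH z (b2 k).
  move=> h1 h2; rewrite Vne 1?eq_sym // Ane // psmulfZ psmulZ //.
have AV0 k : ~~ ((k != i) && (k != j)) ->
    psmulf (Vmat B f al k i) (Amat dH B z f al j k) m = 0.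
  case/nandP => /negPn /eqP ->; [by rewrite Vkk psmul0f | by rewrite Akk psmulf0].
have VA0 k : ~~ ((k != i) && (k != j)) ->
    psmulf (Vmat B f al j k) (Amat dH B z f al k i) m = 0.
  case/nandP => /negPn /eqP ->; [by rewrite Akk psmulf0 | by rewrite Vkk psmul0f].
have Esum : \sum_(k < n) psmulf (Vmat B f al k i) (Amat dH B z f al j k) m
   - \sum_(k < n) psmulf (Vmat B f al j k) (Amat dH B z f al k i) m
   = \sum_(k < n) (if (k != i) && (k != j) then
        (X k *~ (c k i * c j k)) *: dlogZ dH z (b1 k)
        - (X k *~ (c j k * c k i)) *: dlogZ dH z (b2 k) else 0).
  rewrite -sumrB; apply: eq_bigr => k _; case: ifP => [/andP[h1 h2]|h].
    by rewrite AVe // VAe.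
  by rewrite AV0 ?VA0 ?h // subrr.
rewrite /covder -addrA Esum (Vne j i hji) /=.
have lenba k : (len a <= len (b2 k) + len (b1 k))%N by rewrite -(b21 k) len_tri.
case: hyp => [hl|[hQ hV]].
  have fa0 : f a m = 0 by apply: (hf_i _ a0); apply: leq_trans hm hl.
  rewrite fa0 mul0rz dH0 add0r big1 // => k _; case: ifP => // /andP[h1 h2].
  have h2' : k != j -> j != k by rewrite eq_sym.
  have -> : X k = 0.
    rewrite /X psmulC; apply: (psmul_supp _ _ _ _ _ _ (hf_i _ (sub0 _ _ h1))
       (hf_i _ (sub0 _ _ (h2' h2)))).
    exact: leq_trans hm (leq_trans hl (lenba k)).
  by rewrite !mul0rz !scale0r subrr.
rewrite dH_int // hf_iii //.
pose G (b : lattice n) := (psmul (f b) (f (a - b)) m *: dlogZ dH z b) *~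
   (sgnpow (pairing B b (a - b)) * pairing B b (a - b)).
have b1nz k : k != j -> b1 k != 0 by move=> h; rewrite /b1 sub0 // eq_sym.
have b2nz k : k != i -> b2 k != 0 by move=> h; rewrite /b2 sub0.
have Gz b : b != 0 -> (len b <= deg m)%N \/ G b = 0.
  move=> hb; case: (leqP (len b) (deg m)) => h; [by left | right].
  have hz : inS 0 (f (a - b)) by [].
  rewrite /G (psmul_supp _ _ _ _ _ _ (hf_i _ hb) hz) ?addn0 //.
  by rewrite scale0r mul0rz.
have pw (b : lattice n) : (if (b != 0) && (a - b != 0) then G b else 0) =
   \sum_(k < n) (if (k != i) && (k != j) then
       (if b == b1 k then G (b1 k) else 0) + (if b == b2 k then G (b2 k) else 0)
     else 0).
  case Sp: [exists k, (k != i) && (k != j) && ((b == b1 k) || (b == b2 k))].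
    move/existsP: Sp => [k0 /andP[/andP[h1 h2] hb]].
    rewrite (bigD1 k0) //= h1 h2 /=.
    case/orP: hb => /eqP Eb; subst b.
      rewrite ab1 b1nz // b2nz //= eqxx (negbTE (d12 _ _ h1 h2 h1 h2)).
      rewrite big1 ?addr0 // => k hk; case hk': ((k != i) && (k != j)) => //.
      move/andP: hk' => [hk1 hk2].
      by rewrite eq_sym in hk; rewrite (negbTE (d11 _ _ hk)) (negbTE (d12 _ _ h1 h2 hk1 hk2)) addr0.
    rewrite ab2 b1nz // b2nz //= eqxx.
    rewrite eq_sym (negbTE (d12 _ _ h1 h2 h1 h2)) add0r.
    rewrite big1 ?addr0 // => k hk; case hk': ((k != i) && (k != j)) => //.
    move/andP: hk' => [hk1 hk2].
    rewrite eq_sym in hk; rewrite (negbTE (d22 _ _ hk)).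
    by rewrite eq_sym (negbTE (d12 _ _ hk1 hk2 h1 h2)) addr0.
  have hSp k : ~~ ((k != i) && (k != j) && ((b == b1 k) || (b == b2 k))).
    by move/negbT/existsPn: Sp.
  rewrite big1; last first.
    move=> k _; case hk': ((k != i) && (k != j)) => //.
    have := hSp k; rewrite hk' /= negb_or => /andP[/negbTE -> /negbTE ->].
    by rewrite addr0.
  case: ifP => // /andP[hb0 hg0].
  have hne : ~ (exists k : 'I_n, k != i /\ k != j /\
                  ((b = al j - al k /\ a - b = al k - al i) \/
                   (b = al k - al i /\ a - b = al j - al k))).
    move=> [k [hk1 [hk2 [[E _]|[E _]]]]]; have := hSp k;
      by rewrite hk1 hk2 E eqxx ?orbT.
  have hba : b + (a - b) = a by rewrite addrC subrK.
  have := hV b (a - b) hb0 hg0 hba hne m hm => /= hV0.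
  by rewrite /G scalerMzl [_ * pairing B b (a - b)]mulrC mulrzA hV0 mul0rz scale0r.
have Hj : joyce_rhs dH B z f a m =
   - \sum_(k < n) (if (k != i) && (k != j) then G (b1 k) + G (b2 k) else 0).
  rewrite /joyce_rhs; congr (- _).
  transitivity (\sum_(v : {ffun 'I_n -> 'I_((deg m).*2.+1)})
     (if (boxpt v != 0) && (a - boxpt v != 0) then G (boxpt v) else 0)).
    by [].
  rewrite (eq_bigr _ (fun v _ => pw (boxpt v))) exchange_big /=.
  apply: eq_bigr => k _; case: ifP => [/andP[h1 h2]|_]; last by rewrite big1.
  rewrite big_split /= (box_sum _ _ _ _ _ _ (Gz _ (b1nz _ h2))).
  by rewrite (box_sum _ _ _ _ _ _ (Gz _ (b2nz _ h1))).
rewrite Hj mulNrz addrC; apply/eqP; rewrite subr_eq0; apply/eqP.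
rewrite mulrz_suml; apply: eq_bigr => k _.
case hk: ((k != i) && (k != j)); last by rewrite mul0rz.
move/andP: hk => [h1 h2].
have P12 : pairing B (b1 k) (b2 k) =
    pairing B (al j) (al k) - pairing B (al j) (al i) + pairing B (al k) (al i).
  rewrite /b1 /b2 pairingBl !pairingBr // pairing_xx //; ring.
have P21 : pairing B (b2 k) (b1 k) = - pairing B (b1 k) (b2 k).
  exact: pairing_skew.
have e1 : sgnpow (pairing B (b1 k) (b2 k)) * pairing B (b1 k) (b2 k) * c j i
    = c k i * c j k.
  rewrite /c.
  transitivity (sgnpow (pairing B (b1 k) (b2 k) + pairing B (al j) (al i)) *
     (pairing B (al j) (al i) * pairing B (b1 k) (b2 k))).
    rewrite sgnpowD; ring.
  have -> : pairing B (b1 k) (b2 k) + pairing B (al j) (al i) =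
     pairing B (al j) (al k) + pairing B (al k) (al i) by rewrite P12; ring.
  rewrite /b1 /b2 hQ // sgnpowD; ring.
have e2 : sgnpow (pairing B (b2 k) (b1 k)) * pairing B (b2 k) (b1 k) * c j i
    = - (c j k * c k i).
  rewrite P21 sgnpowN mulrN mulNr e1; ring.
rewrite /G ab1 ab2 [psmul (f (b2 k)) _ m]psmulC mulrzDl -!mulrzA -!scalerMzl.
by rewrite e1 e2 mulrNz.
Qed.
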